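(* Let $a,d\in\mathbb N$ and let $\chi\in M(d)_\mathbb{R}$ be strictly dominant with $\chi\in\mathbf{V}^a(1,d)$. Then there exist real numbers $c_{ij}$ ($1\le j<i\le d$) and $c_i$ ($1\le i\le d$) with \[ \chi=\sum_{1\le j<i\le d}c_{ij}(\beta_i-\beta_j)+\sum_{i=1}^dc_i\beta_i,\qquad 0\le c_{ij}\le\tfrac32,\quad -\tfrac{a+2}{2}\le c_i\le\tfrac a2. \]
   Context: $T(d)\subset GL(d)$ diagonal torus with character lattice $M(d)$ having coordinate characters $\beta_1,\dots,\beta_d$; $M(d)_\mathbb R=M(d)\otimes\mathbb R$. $\chi=\sum b_i\beta_i$ is strictly dominant if $b_1<\cdots<b_d$. $\mathbf{V}^a(1,d):=\frac32\,\mathrm{sum}[0,\beta_i-\beta_j]+\frac a2\,\mathrm{sum}[-\beta_k,\beta_k]+\mathrm{sum}[-\beta_k,0]$, Minkowski sums of segments over all $1\le i,j\le d$ and all $1\le k\le d$. *)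

(* Defs.v *)
From HB Require Import structures.
From mathcomp Require Import all_boot all_order all_algebra.
From mathcomp Require Import reals.
Unset Printing Implicit Defensive.
Import Order.TTheory GRing.Theory Num.Theory.
Local Open Scope ring_scope.

(* M(d)_R is modelled as row vectors 'rV[R]_d; beta i is the i-th coordinate
   character (standard basis vector), indices 0..d-1 instead of 1..d. *)
Definition beta (R : realType) {d : nat} (i : 'I_d) : 'rV[R]_d := delta_mx 0 i.

Definition vset (R : realType) (d : nat) := 'rV[R]_d -> Prop.

Definition segment {R : realType} {d : nat} (u v : 'rV[R]_d) : vset R d :=
  fun x => exists t : R, 0 <= t <= 1 /\ x = (1 - t) *: u + t *: v.

Definition msum {R : realType} {d : nat} {I : finType} (S : I -> vset R d) : vset R d :=
  fun x => exists f : I -> 'rV[R]_d, (forall i, S i (f i)) /\ x = \sum_(i : I) f i.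

Definition mplus {R : realType} {d : nat} (A B : vset R d) : vset R d :=
  fun x => exists y z, A y /\ B z /\ x = y + z.

Definition mscale {R : realType} {d : nat} (c : R) (A : vset R d) : vset R d :=
  fun x => exists y, A y /\ x = c *: y.

Definition Va1 (R : realType) (a d : nat) : vset R d :=
  mplus (mplus
    (mscale (3 / 2) (msum (fun ij : 'I_d * 'I_d => segment 0 (beta R ij.1 - beta R ij.2))))
    (mscale (a%:R / 2) (msum (fun k : 'I_d => segment (- beta R k) (beta R k)))))
    (msum (fun k : 'I_d => segment (- beta R k) 0)).

Definition strictly_dominant {R : realType} {d : nat} (chi : 'rV[R]_d) : Prop :=
  forall i j : 'I_d, (i < j)%N -> chi 0 i < chi 0 j.

(* Main.v *)
Require Import Defs.
From HB Require Import structures.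
From mathcomp Require Import all_boot all_order all_algebra.
From mathcomp Require Import reals.
From mathcomp Require Import boolp classical_sets topology normedtype.
From mathcomp Require Import ring lra zify.
Import Order.TTheory GRing.Theory Num.Theory.
Import numFieldNormedType.Exports.
Local Open Scope ring_scope.

Definition clamp {R : realType} (l h v : R) : R := Num.max l (Num.min h v).

Lemma clamp_spec (R : realType) (l h v : R) : l <= h ->
  (v <= l /\ clamp l h v = l) \/ (l <= v <= h /\ clamp l h v = v) \/ (h <= v /\ clamp l h v = h).
Proof.
move=> lh; rewrite /clamp.
have [vh|hv] := leP v h.
  have [vl|lv] := leP v l; first by left.
  by right; left; rewrite ltW.
by right; right; split; [exact: ltW | exact: max_r].
Qed.

Lemma clamp_cont (R : realType) (l h c : R) : continuous (fun th : R => clamp l h (th + c)).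
Proof.
move=> x; rewrite /clamp.
apply: (@continuous_max R R (fun=> l) (fun th => Num.min h (th + c))).
  exact: cst_continuous.
apply: (@continuous_min R R (fun=> h) (fun th => th + c)).
  exact: cst_continuous.
apply: (@continuousD _ _ _ (fun th => th) (fun=> c)).
  by move=> y; exact: cvg_id.
exact: cst_continuous.
Qed.

Lemma sum_clamp_cont (R : realType) (l h : R) (g : nat -> R) (N : nat) :
  continuous (fun th : R => \sum_(k < N) clamp l h (th + g k)).
Proof.
elim: N => [|N IH].
  have -> : (fun th : R => \sum_(k < 0) clamp l h (th + g k)) = fun=> 0.
    by apply: funext => th; rewrite big_ord0.
  exact: cst_continuous.
have -> : (fun th : R => \sum_(k < N.+1) clamp l h (th + g k)) =
  (fun th => (\sum_(k < N) clamp l h (th + g k)) + clamp l h (th + g N)).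
  by apply: funext => th; rewrite big_ord_recr.
move=> x; apply: (@continuousD _ _ _ (fun th => \sum_(k < N) clamp l h (th + g k)) (fun th => clamp l h (th + g N))).
  exact: IH.
exact: clamp_cont.
Qed.

Lemma level_exists (R : realType) (N : nat) (g : nat -> R) (l h s : R) :
  l <= h -> N%:R * l <= s <= N%:R * h ->
  exists th, \sum_(k < N) clamp l h (th + g k) = s.
Proof.
move=> lh /andP[sl sh].
set M := \sum_(k < N) `|g k|.
have M0 : 0 <= M by apply: sumr_ge0 => k _.
have gM : forall k : 'I_N, `|g k| <= M.
  move=> k; rewrite /M (bigD1 k) //= lerDl; exact: sumr_ge0.
set F := fun th : R => \sum_(k < N) clamp l h (th + g k).
have Fa : F (l - M) = N%:R * l.
  rewrite /F (eq_bigr (fun=> l)); first by rewrite sumr_const card_ord mulr_natl.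
  move=> k _; have := gM k; have := ler_norm (g k); move=> h1 h2.
  case: (@clamp_spec _ l h (l - M + g k) lh) => [[_ ->]|[[/andP[h3 h4] ->]|[h3 ->]]] //; lra.
have Fb : F (h + M) = N%:R * h.
  rewrite /F (eq_bigr (fun=> h)); first by rewrite sumr_const card_ord mulr_natl.
  move=> k _; have := gM k; move=> h2.
  have h1' : - g k <= `|g k| by rewrite -normrN ler_norm.
  case: (@clamp_spec _ l h (h + M + g k) lh) => [[h3 ->]|[[/andP[h3 h4] ->]|[_ ->]]] //; lra.
have ab : l - M <= h + M by lra.
have := @IVT R F (l - M) (h + M) s ab.
case.
- apply: continuous_subspaceT; exact: sum_clamp_cont.
- rewrite Fa Fb; have nlh : N%:R * l <= N%:R * h by rewrite ler_wpM2l.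
  by rewrite (min_l nlh) (max_r nlh) sl sh.
by move=> th _ Fth; exists th.
Qed.


Lemma exists_min (R : realType) (D : nat -> R) (N : nat) :
  exists m0, (m0 <= N)%N /\ forall m, (m <= N)%N -> D m0 <= D m.
Proof.
elim: N => [|N [m0 [hm0 hmin]]].
  by exists 0%N; split=> // m; rewrite leqn0 => /eqP ->.
have [le|lt] := leP (D m0) (D N.+1).
  exists m0; split; first exact: leqW.
  move=> m; rewrite leq_eqVlt => /orP[/eqP -> //|]; rewrite ltnS; exact: hmin.
exists N.+1; split=> // m; rewrite leq_eqVlt => /orP[/eqP -> //|]; rewrite ltnS => hm.
exact: le_trans (ltW lt) (hmin m hm).
Qed.

Lemma concave_nonneg (R : realType) (t : R) (D : nat -> R) (N : nat) :
  0 < t -> 0 <= D 0%N -> 0 <= D N ->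
  (forall m, (0 < m < N)%N -> 0 <= D m \/ D m.+1 + D m.-1 + 2 * t <= 2 * D m) ->
  forall m, (m <= N)%N -> 0 <= D m.
Proof.
move=> t0 D0 DN hmid.
have [m0 [hm0 hmin]] := @exists_min R D N.
suff : 0 <= D m0 by move=> h m hm; exact: le_trans h (hmin m hm).
case: m0 hm0 hmin => [//|m0] hm0 hmin.
move: hm0; rewrite leq_eqVlt => /orP[/eqP e|hlt]; first by rewrite e.
have [//|h] := hmid m0.+1 hlt.
have h1 := hmin m0.+2 hlt.
have h2 := hmin m0 (leqW (ltnW hlt)).
simpl in h; lra.
Qed.


Lemma ler_sum_nat' (R : realType) (a b : nat) (F G : nat -> R) :
  (forall i, (a <= i < b)%N -> F i <= G i) ->
  \sum_(a <= i < b) F i <= \sum_(a <= i < b) G i.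
Proof.
move=> H; rewrite big_nat_cond [X in _ <= X]big_nat_cond.
by apply: ler_sum => i /andP[h _]; exact: H.
Qed.

Lemma clamp0t_mono (R : realType) (t th u v : R) : 0 < t -> u <= v ->
  u + clamp 0 t (th + - u) <= v + clamp 0 t (th + - v).
Proof.
move=> t0 uv; have t0' : 0 <= t by exact: ltW.
case: (@clamp_spec _ 0 t (th + - u) t0') => [[h1 ->]|[[/andP[h1 h2] ->]|[h1 ->]]];
case: (@clamp_spec _ 0 t (th + - v) t0') => [[h3 ->]|[[/andP[h3 h4] ->]|[h3 ->]]]; lra.
Qed.

Lemma clamp_bounds (R : realType) (l h v : R) : l <= h -> l <= clamp l h v <= h.
Proof.
move=> lh; case: (@clamp_spec _ l h v lh) => [[h1 ->]|[[/andP[h1 h2] ->]|[h1 ->]]];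
  apply/andP; split => //; lra.
Qed.

Lemma Qstep_top (R : realType) (t th : R) (N : nat) (q : nat -> R) :
  0 < t ->
  (forall i j, (i <= j <= N.+1)%N -> q i <= q j) ->
  \sum_(0 <= k < N.+2) q k = 0 ->
  (forall m, (m <= N.+2)%N -> \sum_(N.+2 - m <= k < N.+2) q k <= t * m%:R * (N.+2 - m)%:R) ->
  \sum_(0 <= k < N.+1) clamp 0 t (th + - q k) = q N.+1 ->
  forall m, (m <= N.+1)%N ->
    \sum_(N.+1 - m <= k < N.+1) (q k + clamp 0 t (th + - q k)) <= t * m%:R * (N.+1 - m)%:R.
Proof.
move=> t0 mono sum0 top hth.
have t0' : 0 <= t by exact: ltW.
set f := fun k => clamp 0 t (th + - q k).
set q' := fun k => q k + f k.
have sumq' : \sum_(0 <= k < N.+1) q' k = 0.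
  have := sum0; rewrite big_nat_recr //= => s0.
  rewrite big_split /= hth; lra.
pose T m := \sum_(N.+1 - m <= k < N.+1) q' k.
pose D m := t * m%:R * ((N.+1)%:R - m%:R) - T m.
suff H : forall m, (m <= N.+1)%N -> 0 <= D m.
  move=> m hm; have := H m hm; rewrite /D /T natrB //; lra.
apply: (@concave_nonneg R t D N.+1) => //.
- rewrite /D /T subn0 big_geq //; lra.
- rewrite /D /T subnn sumq'; lra.
move=> m /andP[m0 mN].
set b' := (N - m)%N.
have hb : (N.+1 - m = b'.+1)%N by rewrite /b' subSn.
have hb1 : (N.+1 - m.+1 = b')%N by rewrite subSS.
have hbN : (b' < N)%N by rewrite /b'; lia.
have Tm : T m = \sum_(b'.+1 <= k < N.+1) q' k by rewrite /T hb.
have Tm1 : T m.+1 = q' b' + T m.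
  rewrite Tm /T hb1 big_ltn //; lia.
have Tm2 : T m = q' b'.+1 + T m.-1.
  rewrite Tm big_ltn; last lia.
  by rewrite /T; congr (_ + _); apply: congr_big_nat => //; lia.
have natm : (m%:R : R) = m.-1%:R + 1 by rewrite -[in LHS](prednK m0) -natr1.
have natb : ((N.+1)%:R - m%:R : R) = b'.+1%:R by rewrite -natrB ?hb // ltnW.
case: (leP (th + - q b'.+1) 0) => hA.
  left.
  have f0 : forall k, (b'.+1 <= k < N.+1)%N -> f k = 0.
    move=> k /andP[k1 k2]; have hk : q b'.+1 <= q k by apply: mono; lia.
    rewrite /f; case: (@clamp_spec _ 0 t (th + - q k) t0') => [[_ ->]|[[/andP[h1 h2] ->]|[h1 ->]]] //; lra.
  have T1 : T m <= m%:R * q N.+1.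
    rewrite Tm (eq_big_nat _ _ (F2 := q)); last by move=> k hk; rewrite /q' f0 // addr0.
    apply: le_trans (@ler_sum_nat' _ _ _ _ (fun=> q N.+1) _) _.
      by move=> k /andP[_ hk]; apply: mono; lia.
    by rewrite sumr_const_nat -hb subKn ?mulr_natl // ltnW.
  have T2 : q N.+1 <= t * b'.+1%:R.
    rewrite -hth (@big_cat_nat _ _ _ b'.+1) /=; [|lia|lia].
    rewrite [X in _ + X](eq_big_nat _ _ (F2 := fun=> 0)); last by move=> k hk; exact: f0.
    rewrite big1_eq addr0.
    apply: le_trans (@ler_sum_nat' _ _ _ _ (fun=> t) _) _.
      by move=> k _; have := @clamp_bounds _ 0 t (th + - q k) t0'; case/andP.
    by rewrite sumr_const_nat subn0 mulr_natr.
  have m0' : (0 : R) <= m%:R by rewrite ler0n.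
  have := ler_wpM2l m0' T2; rewrite /D natb; nra.
case: (leP t (th + - q b')) => hB.
  left.
  have ft : forall k, (k < b'.+1)%N -> f k = t.
    move=> k k1; have hk : q k <= q b' by apply: mono; lia.
    rewrite /f; case: (@clamp_spec _ 0 t (th + - q k) t0') => [[h1 ->]|[[/andP[h1 h2] ->]|[h1 ->]]] //; lra.
  have T1 : T m = - \sum_(0 <= k < b'.+1) q k - t * b'.+1%:R.
    have hf : \sum_(0 <= k < b'.+1) f k = t * b'.+1%:R.
      rewrite (eq_big_nat _ _ (F2 := fun=> t)); last by move=> k /andP[_ hk]; exact: ft.
      by rewrite sumr_const_nat subn0 mulr_natr.
    have := sumq'; rewrite (@big_cat_nat _ _ _ b'.+1) /=; [|lia|lia].
    rewrite -Tm big_split /= hf; lra.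
  have T2 : \sum_(0 <= k < b'.+1) q k = - \sum_(b'.+1 <= k < N.+2) q k.
    have := sum0; rewrite (@big_cat_nat _ _ _ b'.+1) /=; [|lia|lia].
    lra.
  have T3 := top m.+1 (ltnW mN); rewrite subSS hb in T3.
  rewrite /D natb T1 T2.
  rewrite -natr1 in T3.
  have e : t * (m%:R + 1) * b'.+1%:R = t * m%:R * b'.+1%:R + t * b'.+1%:R by ring.
  lra.
right.
have qb : q b' <= q b'.+1 by apply: mono; lia.
have e1 : q' b'.+1 = th.
  rewrite /q' /f; case: (@clamp_spec _ 0 t (th + - q b'.+1) t0') => [[h1 ->]|[[/andP[h1 h2] ->]|[h1 ->]]]; lra.
have e2 : q' b' = th.
  rewrite /q' /f; case: (@clamp_spec _ 0 t (th + - q b') t0') => [[h1 ->]|[[/andP[h1 h2] ->]|[h1 ->]]]; lra.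
rewrite /D Tm1 e2 Tm2 e1.
have -> : (m.+1%:R : R) = m.-1%:R + 1 + 1 by rewrite -natr1 natm.
rewrite natm.
rewrite le_eqVlt; apply/orP; left; apply/eqP; ring.
Qed.

Lemma Qlemma (R : realType) (t : R) : 0 < t -> forall (N : nat) (q : nat -> R),
  (forall i j, (i <= j <= N)%N -> q i <= q j) ->
  \sum_(0 <= k < N.+1) q k = 0 ->
  (forall m, (m <= N.+1)%N -> \sum_(N.+1 - m <= k < N.+1) q k <= t * m%:R * (N.+1 - m)%:R) ->
  exists e : nat -> nat -> R, (forall i j, 0 <= e i j <= t) /\
    forall k, (k <= N)%N -> q k = \sum_(0 <= j < k) e k j - \sum_(k.+1 <= i < N.+1) e i k.
Proof.
move=> t0; have t0' : 0 <= t by exact: ltW.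
elim=> [|N IH] q mono sum0 top.
  exists (fun _ _ => 0); split; first by move=> *; rewrite lexx t0'.
  move=> k; rewrite leqn0 => /eqP ->; rewrite !big_geq // subrr.
  by move: sum0; rewrite big_nat1.
have qt0 : 0 <= q N.+1.
  have : \sum_(0 <= k < N.+2) q k <= \sum_(0 <= k < N.+2) q N.+1.
    by apply: ler_sum_nat' => i hi; apply: mono; lia.
  rewrite sum0 sumr_const_nat subn0 -mulr_natl => h.
  by rewrite -(pmulr_rge0 _ (ltr0Sn R N.+1)).
have qtt : q N.+1 <= N.+1%:R * t.
  have := top 1%N isT; rewrite subSS subn0 big_nat1.
  by rewrite mulr1 mulrC.
have [th hth] := @level_exists R N.+1 (fun k => - q k) 0 t (q N.+1) t0'
  (ltac:(by rewrite mulr0 qt0 qtt)).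
rewrite -(big_mkord xpredT (fun k => clamp 0 t (th + - q k))) in hth.
set f := fun k => clamp 0 t (th + - q k).
have [e [eb eq]] := IH (fun k => q k + f k)
  (fun i j hij => @clamp0t_mono R t th (q i) (q j) t0 (mono i j (ltac:(lia))))
  (ltac:(have := sum0; rewrite big_nat_recr //= big_split /= => s0; rewrite /f hth; lra))
  (@Qstep_top R t th N q t0 mono sum0 top hth).
exists (fun i j => if i == N.+1 then (if (j < N.+1)%N then f j else 0) else e i j).
split.
  move=> i j; case: (i == N.+1); last exact: eb.
  case: (j < N.+1)%N; last by rewrite lexx t0'.
  exact: clamp_bounds.
move=> k; rewrite leq_eqVlt => /orP[/eqP ->|hk].
  rewrite [X in _ - X]big_geq // subr0 -hth.
  by apply: eq_big_nat => j hj; rewrite eqxx (_ : (j < N.+1)%N); last lia.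
have hkN : (k <= N)%N by lia.
rewrite big_nat_recr /=; last by lia.
rewrite eqxx hk.
have -> : \sum_(0 <= j < k) (if k == N.+1 then (if (j < N.+1)%N then f j else 0) else e k j)
  = \sum_(0 <= j < k) e k j.
  by apply: eq_big_nat => j _; rewrite (_ : (k == N.+1) = false) //; apply/negbTE; lia.
have -> : \sum_(k.+1 <= i < N.+1) (if i == N.+1 then f k else e i k)
  = \sum_(k.+1 <= i < N.+1) e i k.
  by apply: eq_big_nat => i hi; rewrite (_ : (i == N.+1) = false) //; apply/negbTE; lia.
have := eq k hkN; rewrite /f; lra.
Qed.


Lemma clamp_sub_mono (R : realType) (lo hi th u v : R) : lo <= hi -> u <= v ->
  u - clamp lo hi (th + u) <= v - clamp lo hi (th + v).
Proof.
move=> lh uv.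
case: (@clamp_spec _ lo hi (th + u) lh) => [[h1 ->]|[[/andP[h1 h2] ->]|[h1 ->]]];
case: (@clamp_spec _ lo hi (th + v) lh) => [[h3 ->]|[[/andP[h3 h4] ->]|[h3 ->]]]; lra.
Qed.

Lemma Blemma (R : realType) (t lo hi : R) (N : nat) (x : nat -> R) : 0 < t -> lo <= hi ->
  (forall i j, (i <= j < N)%N -> x i <= x j) ->
  (forall m, (m <= N)%N -> \sum_(N - m <= k < N) x k <= m%:R * hi + t * m%:R * (N - m)%:R) ->
  (forall m, (m <= N)%N -> m%:R * lo - t * m%:R * (N - m)%:R <= \sum_(0 <= k < m) x k) ->
  exists c : nat -> R, (forall k, lo <= c k <= hi) /\
    (forall i j, (i <= j < N)%N -> x i - c i <= x j - c j) /\
    \sum_(0 <= k < N) (x k - c k) = 0 /\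
    (forall m, (m <= N)%N -> \sum_(N - m <= k < N) (x k - c k) <= t * m%:R * (N - m)%:R).
Proof.
move=> t0 lh mono top bot.
have [th hth] : exists th, \sum_(0 <= k < N) clamp lo hi (th + x k) = \sum_(0 <= k < N) x k.
  have := @level_exists R N x lo hi (\sum_(0 <= k < N) x k) lh.
  case; last by move=> th h; exists th; rewrite big_mkord.
  have h1 := top N (leqnn N); have h2 := bot N (leqnn N).
  have z : ((N - N)%:R : R) = 0 by rewrite subnn.
  rewrite z mulr0 in h1 h2; rewrite subnn in h1.
  rewrite mulrC [_ * hi]mulrC; apply/andP; split; lra.
set c := fun k => clamp lo hi (th + x k).
exists c; split; first by move=> k; exact: clamp_bounds.
split; first by move=> i j hij; apply: clamp_sub_mono => //; exact: mono.
have sum0 : \sum_(0 <= k < N) (x k - c k) = 0 by rewrite sumrB hth subrr.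
split => //.
pose T m := \sum_(N - m <= k < N) (x k - c k).
pose D m := t * m%:R * (N%:R - m%:R) - T m.
suff H : forall m, (m <= N)%N -> 0 <= D m.
  move=> m hm; have := H m hm; rewrite /D /T natrB //; lra.
apply: (@concave_nonneg R t D N) => //.
- rewrite /D /T subn0 big_geq //; lra.
- rewrite /D /T subnn sum0; lra.
move=> m /andP[m0 mN].
set b' := (N - m.+1)%N.
have hb : (N - m = b'.+1)%N by rewrite /b'; lia.
have hb1 : (N - m.+1 = b')%N by [].
have hbN : (b'.+1 < N)%N by rewrite /b'; lia.
have Tm : T m = \sum_(b'.+1 <= k < N) (x k - c k) by rewrite /T hb.
have Tm1 : T m.+1 = (x b' - c b') + T m.
  rewrite Tm /T hb1 big_ltn //; lia.
have Tm2 : T m = (x b'.+1 - c b'.+1) + T m.-1.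
  rewrite Tm big_ltn; last lia.
  by rewrite /T; congr (_ + _); apply: congr_big_nat => //; lia.
have natm : (m%:R : R) = m.-1%:R + 1 by rewrite -[in LHS](prednK m0) -natr1.
have natb : (N%:R - m%:R : R) = b'.+1%:R by rewrite -natrB ?hb // ltnW.
case: (leP hi (th + x b'.+1)) => hA.
  left.
  have chi : forall k, (b'.+1 <= k < N)%N -> c k = hi.
    move=> k hk; have : x b'.+1 <= x k by apply: mono; lia.
    rewrite /c; case: (@clamp_spec _ lo hi (th + x k) lh) => [[h1 ->]|[[/andP[h1 h2] ->]|[h1 ->]]] //; lra.
  have T1 : T m = \sum_(N - m <= k < N) x k - m%:R * hi.
    have hc : \sum_(b'.+1 <= k < N) c k = m%:R * hi.
      rewrite (eq_big_nat _ _ (F2 := fun=> hi)); last exact: chi.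
      by rewrite sumr_const_nat -hb subKn ?mulr_natl // ltnW.
    by rewrite Tm sumrB hc hb.
  have := top m (ltnW mN); rewrite /D T1 natrB ?(ltnW mN) //; lra.
case: (leP (th + x b') lo) => hB.
  left.
  have clo : forall k, (k < b'.+1)%N -> c k = lo.
    move=> k hk; have : x k <= x b' by apply: mono; lia.
    rewrite /c; case: (@clamp_spec _ lo hi (th + x k) lh) => [[h1 ->]|[[/andP[h1 h2] ->]|[h1 ->]]] //; lra.
  have T1 : T m = - (\sum_(0 <= k < b'.+1) x k - b'.+1%:R * lo).
    have := sum0; rewrite (@big_cat_nat _ _ _ b'.+1) /=; [|lia|lia].
    rewrite -Tm => s0.
    have : \sum_(0 <= k < b'.+1) (x k - c k) = \sum_(0 <= k < b'.+1) x k - b'.+1%:R * lo.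
      have hc : \sum_(0 <= k < b'.+1) c k = b'.+1%:R * lo.
        rewrite (eq_big_nat _ _ (F2 := fun=> lo)); last by move=> k /andP[_ hk]; exact: clo.
        by rewrite sumr_const_nat subn0 mulr_natl.
      by rewrite sumrB hc.
    lra.
  have h := bot b'.+1 (ltnW hbN).
  have hN : ((N - b'.+1)%:R : R) = m%:R by rewrite (_ : (N - b'.+1 = m)%N) //; lia.
  rewrite hN in h; rewrite /D natb T1.
  have e : t * m%:R * b'.+1%:R = t * b'.+1%:R * m%:R by ring.
  lra.
right.
have xb : x b' <= x b'.+1 by apply: mono; lia.
have e1 : x b'.+1 - c b'.+1 = - th.
  rewrite /c; case: (@clamp_spec _ lo hi (th + x b'.+1) lh) => [[h1 ->]|[[/andP[h1 h2] ->]|[h1 ->]]]; lra.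
have e2 : x b' - c b' = - th.
  rewrite /c; case: (@clamp_spec _ lo hi (th + x b') lh) => [[h1 ->]|[[/andP[h1 h2] ->]|[h1 ->]]]; lra.
rewrite /D Tm1 e2 Tm2 e1.
have -> : (m.+1%:R : R) = m.-1%:R + 1 + 1 by rewrite -natr1 natm.
rewrite natm.
rewrite le_eqVlt; apply/orP; left; apply/eqP; ring.
Qed.


Lemma betaE (R : realType) (d : nat) (i k : 'I_d) : beta R i 0 k = (k == i)%:R.
Proof. by rewrite /beta mxE eqxx. Qed.

Lemma sum_ind (R : realType) (d : nat) (P : pred 'I_d) :
  \sum_(i < d) ((P i)%:R : R) = #|P|%:R.
Proof.
rewrite (eq_bigr (fun i => if P i then 1 else 0)); last by move=> i _; case: (P i).
by rewrite -big_mkcond sumr_const.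
Qed.

Lemma pair_count (R : realType) (d : nat) (P : pred 'I_d) :
  \sum_(ij : 'I_d * 'I_d) ((P ij.1 && ~~ P ij.2)%:R : R) = (#|P| * #|predC P|)%:R.
Proof.
rewrite -(pair_big xpredT xpredT (fun i j => ((P i && ~~ P j)%:R : R))) /=.
rewrite (eq_bigr (fun i => (P i)%:R * #|predC P|%:R)).
  by rewrite -big_distrl /= sum_ind natrM.
move=> i _; case: (P i) => /=.
  by rewrite mul1r -sum_ind.
by rewrite mul0r big1.
Qed.

Lemma sum_pred_delta (R : realType) (d : nat) (P : pred 'I_d) (i : 'I_d) :
  \sum_(k | P k) ((k == i)%:R : R) = (P i)%:R.
Proof.
rewrite big_mkcond /= (bigD1 i) //= big1 ?addr0; first by rewrite eqxx; case: (P i).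
by move=> k /negbTE ki; rewrite ki; case: (P k).
Qed.

Lemma Alemma (R : realType) (a d : nat) (chi : 'rV[R]_d) : Va1 R a d chi ->
  exists (F c : 'I_d -> R), (forall k, chi 0 k = 3 / 2 * F k + c k) /\
    (forall k, - ((a%:R + 2) / 2) <= c k <= a%:R / 2) /\
    (forall P : pred 'I_d, - (#|P| * #|predC P|)%:R <= \sum_(k | P k) F k <= (#|P| * #|predC P|)%:R).
Proof.
move=> [y [z [[y1 [z1 [[w [[f [hf ->]] ->]] [[w2 [[g [hg ->]] ->]] ->]]]] [[h [hh ->]] ->]]]].
exists (fun k => \sum_ij f ij 0 k).
exists (fun k => a%:R / 2 * \sum_l g l 0 k + \sum_l h l 0 k).
split.
  move=> k; rewrite !mxE !summxE; ring.
split.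
  move=> k.
  have gk : forall l, exists s : R, 0 <= s <= 1 /\ g l 0 k = (k == l)%:R * (2 * s - 1).
    move=> l; have [s [hs ->]] := hg l; exists s; split => //.
    rewrite /beta !mxE eqxx /=; ring.
  have hk : forall l, exists s : R, 0 <= s <= 1 /\ h l 0 k = (k == l)%:R * (s - 1).
    move=> l; have [s [hs ->]] := hh l; exists s; split => //.
    rewrite /beta !mxE eqxx /=; ring.
  have Sg : \sum_l g l 0 k = g k 0 k.
    rewrite (bigD1 k) //= big1 ?addr0 // => l /negbTE lk.
    by have [s [_ ->]] := gk l; rewrite eq_sym lk mul0r.
  have Sh : \sum_l h l 0 k = h k 0 k.
    rewrite (bigD1 k) //= big1 ?addr0 // => l /negbTE lk.
    by have [s [_ ->]] := hk l; rewrite eq_sym lk mul0r.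
  rewrite Sg Sh.
  have [s1 [/andP[s10 s11] ->]] := gk k; have [s2 [/andP[s20 s21] ->]] := hk k.
  rewrite eqxx !mul1r.
  have hA : (a%:R + 2) / 2 = a%:R / 2 + 1 :> R by field.
  have a0 : (0 : R) <= a%:R / 2 by rewrite divr_ge0 // ler0n.
  rewrite hA; set A := a%:R / 2.
  have e : A * (2 * s1 - 1) = 2 * (A * s1) - A by ring.
  have p1 : 0 <= A * s1 by rewrite mulr_ge0.
  have p2 : A * s1 <= A by rewrite ler_piMr.
  rewrite e; apply/andP; split; lra.
move=> P.
rewrite exchange_big /=.
have hij : forall ij : 'I_d * 'I_d,
    - ((P ij.2 && ~~ P ij.1)%:R) <= \sum_(k | P k) f ij 0 k <= (P ij.1 && ~~ P ij.2)%:R.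
  move=> [i j] /=; have [s [/andP[s0 s1] ->]] := hf (i, j).
  have -> : \sum_(k | P k) (((1 - s) *: (0 : 'rV[R]_d) + s *: (beta R (i, j).1 - beta R (i, j).2)) 0 k)
      = s * ((P i)%:R - (P j)%:R).
    rewrite (eq_bigr (fun k => s * ((k == i)%:R - (k == j)%:R))); last first.
      by move=> k _; rewrite /beta !mxE eqxx /=; ring.
    by rewrite -mulr_sumr sumrB !sum_pred_delta.
  by case: (P i); case: (P j) => /=; apply/andP; split; lra.
have lo : \sum_(ij : 'I_d * 'I_d) - ((P ij.2 && ~~ P ij.1)%:R : R)
    <= \sum_ij \sum_(k | P k) f ij 0 k.
  by apply: ler_sum => ij _; case/andP: (hij ij).
have hi : \sum_ij \sum_(k | P k) f ij 0 k
    <= \sum_(ij : 'I_d * 'I_d) ((P ij.1 && ~~ P ij.2)%:R : R).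
  by apply: ler_sum => ij _; case/andP: (hij ij).
rewrite pair_count in hi.
rewrite sumrN in lo.
have pc := pair_count R d (fun k : 'I_d => ~~ P k).
rewrite (eq_bigr (fun ij : 'I_d * 'I_d => ((~~ P ij.1 && ~~ ~~ P ij.2)%:R : R))) in lo; last first.
  by move=> [i j] _ /=; rewrite negbK andbC.
rewrite pc in lo.
have cc : #|predC (fun k : 'I_d => ~~ P k)| = #|P| by apply: eq_card => k /=; rewrite !inE negbK.
have cc2 : #|(fun k : 'I_d => ~~ P k)| = #|predC P| by apply: eq_card => k /=; rewrite !inE.
rewrite cc cc2 mulnC in lo.
by apply/andP; split.
Qed.


Lemma card_top (d m : nat) : (m <= d)%N -> #|(fun k : 'I_d => (d - m <= k)%N)| = m.
Proof.
move=> md; rewrite -sum1_card.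
rewrite (eq_bigl (fun i : 'I_d => xpredT (nat_of_ord i) && (d - m <= i)%N)) //.
rewrite -(@big_geq_mkord nat 0%N addn (d - m) d xpredT (fun=> 1%N)).
rewrite sum_nat_const_nat muln1; lia.
Qed.

Lemma card_bot (d m : nat) : (m <= d)%N -> #|(fun k : 'I_d => (k < m)%N)| = m.
Proof.
move=> md; rewrite -sum1_card.
rewrite (eq_bigl (fun i : 'I_d => xpredT (nat_of_ord i) && (i < m)%N)) //.
rewrite -(@big_mkord nat 0%N addn d (fun i => xpredT i && (i < m)%N) (fun=> 1%N)).
rewrite -(@big_nat_widen nat 0%N addn 0 m d xpredT (fun=> 1%N)) //.
rewrite sum_nat_const_nat muln1; lia.
Qed.

Lemma cardC' (d : nat) (P : pred 'I_d) : #|predC P| = (d - #|P|)%N.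
Proof. have h : (#|P| + #|predC P| = d)%N by rewrite cardC card_ord. lia. Qed.

Lemma entry_eq (R : realType) (d : nat) (e : nat -> nat -> R) (c : nat -> R) (k : 'I_d) :
  (\sum_(i < d) \sum_(j < d | (j < i)%N) e i j *: (beta R i - beta R j)
          + \sum_(i < d) c i *: beta R i) 0 k =
  \sum_(0 <= j < k) e k j - \sum_(k.+1 <= i < d) e i k + c k.
Proof.
rewrite !mxE !summxE.
have E1 : forall i : 'I_d, (\sum_(j < d | (j < i)%N) e i j *: (beta R i - beta R j)) 0 k
    = \sum_(j < d | (j < i)%N) e i j * (k == i)%:R - \sum_(j < d | (j < i)%N) e i j * (k == j)%:R.
  move=> i; rewrite summxE -sumrB; apply: eq_bigr => j _; rewrite /beta !mxE eqxx /=; ring.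
have E2 : forall i : 'I_d, (c i *: beta R i) 0 k = c i * (k == i)%:R.
  by move=> i; rewrite /beta !mxE eqxx /=.
under eq_bigr => i _ do rewrite E1.
under [X in _ + X]eq_bigr => i _ do rewrite E2.
rewrite sumrB.
have A : \sum_(i < d) \sum_(j < d | (j < i)%N) e i j * (k == i)%:R = \sum_(j < d | (j < k)%N) e k j.
  rewrite (bigD1 k) //= [X in _ + X]big1 ?addr0.
    by apply: eq_bigr => j _; rewrite eqxx mulr1.
  move=> i /negbTE ik; apply: big1 => j _; by rewrite eq_sym ik mulr0.
have B : \sum_(i < d) \sum_(j < d | (j < i)%N) e i j * (k == j)%:R = \sum_(i < d | (k < i)%N) e i k.
  rewrite [RHS]big_mkcond /=; apply: eq_bigr => i _.
  case: ifP => ki.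
    rewrite (bigD1 k) //= eqxx mulr1 [X in _ + X]big1 ?addr0 //.
    by move=> j /andP[_ /negbTE jk]; rewrite eq_sym jk mulr0.
  apply: big1 => j ji; rewrite (_ : (k == j) = false) ?mulr0 //.
  by apply/negbTE; apply: contraFN ki => /eqP ->.
have C : \sum_(i < d) c i * (k == i)%:R = c k.
  rewrite (bigD1 k) //= eqxx mulr1 [X in _ + X]big1 ?addr0 //.
  by move=> i /negbTE ik; rewrite eq_sym ik mulr0.
rewrite A B C.
have A' : \sum_(0 <= j < k) e k j = \sum_(j < d | (j < k)%N) e k j.
  rewrite (@big_nat_widen _ _ _ 0 k d xpredT) ?(ltnW (ltn_ord k)) //.
  by rewrite big_mkord.
have B' : \sum_(k.+1 <= i < d) e i k = \sum_(i < d | (k < i)%N) e i k.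
  by rewrite big_geq_mkord.
by rewrite A' B'.
Qed.

Theorem proposition3p3 (R : realType) (a d : nat) (chi : 'rV[R]_d) :
  strictly_dominant chi -> Va1 R a d chi ->
  exists (cij : 'I_d -> 'I_d -> R) (ci : 'I_d -> R),
    chi = \sum_(i < d) \sum_(j < d | (j < i)%N) cij i j *: (beta R i - beta R j)
          + \sum_(i < d) ci i *: beta R i
    /\ (forall i j : 'I_d, (j < i)%N -> 0 <= cij i j <= 3 / 2)
    /\ (forall i : 'I_d, - ((a%:R + 2) / 2) <= ci i <= a%:R / 2).
Proof.
move=> hdom hV.
have [F [c0 [hchi [hc hP]]]] := @Alemma R a d chi hV.
case: d chi hdom hV F c0 hchi hc hP => [|N] chi hdom hV F c0 hchi hc hP.
  exists (fun _ _ => 0), (fun _ => 0); split; last by split; case.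
  by apply/rowP; case.
set x := fun k : nat => chi 0 (inord k).
set lo : R := - ((a%:R + 2) / 2); set hi : R := a%:R / 2.
have t0 : (0 : R) < 3 / 2 by rewrite divr_gt0.
have lh : lo <= hi.
  rewrite /lo /hi; have a0 : (0 : R) <= a%:R by rewrite ler0n.
  have e : (a%:R + 2) / 2 = a%:R / 2 + 1 :> R by field.
  rewrite e; have : (0 : R) <= a%:R / 2 by rewrite divr_ge0. lra.
have mono : forall i j, (i <= j < N.+1)%N -> x i <= x j.
  move=> i j /andP[ij jN]; rewrite /x.
  case: (ltngtP i j) => [hij||->] //; last by lia.
  apply: ltW; apply: hdom; rewrite !inordK //; lia.
have hsum : forall P : pred 'I_N.+1,
    \sum_(k | P k) chi 0 k = 3 / 2 * \sum_(k | P k) F k + \sum_(k | P k) c0 k.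
  by move=> P; rewrite mulr_sumr -big_split /=; apply: eq_bigr => k _; rewrite hchi.
have csum : forall P : pred 'I_N.+1,
    #|P|%:R * lo <= \sum_(k | P k) c0 k <= #|P|%:R * hi.
  move=> P; rewrite !mulr_natl.
  apply/andP; split.
    have -> : lo *+ #|P| = \sum_(k | P k) lo by rewrite sumr_const.
    by apply: ler_sum => k _; case/andP: (hc k).
  have -> : hi *+ #|P| = \sum_(k | P k) hi by rewrite sumr_const.
  by apply: ler_sum => k _; case/andP: (hc k).
have top : forall m, (m <= N.+1)%N ->
    \sum_(N.+1 - m <= k < N.+1) x k <= m%:R * hi + 3 / 2 * m%:R * (N.+1 - m)%:R.
  move=> m hm.
  set P := fun k : 'I_N.+1 => (N.+1 - m <= k)%N.
  have -> : \sum_(N.+1 - m <= k < N.+1) x k = \sum_(k | P k) chi 0 k.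
    rewrite big_geq_mkord; apply: eq_big => // k; by rewrite /x inord_val.
  have cP : #|P| = m by exact: card_top.
  have cC : #|predC P| = (N.+1 - m)%N by rewrite cardC' cP.
  rewrite hsum; have := hP P; have := csum P; rewrite cC cP natrM.
  move=> /andP[_ h1] /andP[_ h2].
  have : 3 / 2 * \sum_(k | P k) F k <= 3 / 2 * (m%:R * (N.+1 - m)%:R).
    by rewrite ler_wpM2l // ltW.
  rewrite mulrA; lra.
have bot : forall m, (m <= N.+1)%N ->
    m%:R * lo - 3 / 2 * m%:R * (N.+1 - m)%:R <= \sum_(0 <= k < m) x k.
  move=> m hm.
  set P := fun k : 'I_N.+1 => (k < m)%N.
  have -> : \sum_(0 <= k < m) x k = \sum_(k | P k) chi 0 k.
    rewrite (@big_nat_widen _ _ _ 0 m N.+1 xpredT) // big_mkord.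
    apply: eq_big => // k; by rewrite /x inord_val.
  have cP : #|P| = m by exact: card_bot.
  have cC : #|predC P| = (N.+1 - m)%N by rewrite cardC' cP.
  rewrite hsum; have := hP P; have := csum P; rewrite cC cP natrM.
  move=> /andP[h1 _] /andP[h2 _].
  have : 3 / 2 * (- (m%:R * (N.+1 - m)%:R)) <= 3 / 2 * \sum_(k | P k) F k.
    by rewrite ler_wpM2l // ltW.
  rewrite mulrN mulrA; lra.
have [c [cb [cmono [csum0 ctop]]]] := @Blemma R (3 / 2) lo hi N.+1 x t0 lh mono top bot.
have [e [eb eeq]] := @Qlemma R (3 / 2) t0 N (fun k => x k - c k)
  (fun i j h => cmono i j h) csum0 ctop.
exists (fun i j => e i j), (fun i => c i); split.
  apply/rowP => k; rewrite entry_eq.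
  have := eeq k (ltn_ord k); rewrite /x inord_val => <-; ring.
split; first by move=> i j _; exact: eb.
by move=> i; exact: cb.
Qed.
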